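(* For every nonnegative integer $n$, $$\sum_{k=0}^{\infty}(-1)^k(4k+1)\,\frac{(-n)_k\,(-2n-\tfrac12)_k\,(\tfrac12)_k}{k!\,(n+\tfrac32)_k\,(2n+2)_k}=\left(\frac{2^2}{3^3}\right)^n\frac{(\tfrac32)_n^2}{(\tfrac43)_n(\tfrac23)_n}.$$ (The sum is finite, since $(-n)_k=0$ for $k>n$.)
   Context: $(a)_j=\Gamma(a+j)/\Gamma(a)=a(a+1)\cdots(a+j-1)$ denotes the rising factorial (Pochhammer symbol), with $(a)_0=1$. *)

(* Defs.v *)
From HB Require Import structures.
From mathcomp Require Import all_boot all_order all_algebra.
Set Implicit Arguments. Unset Strict Implicit. Unset Printing Implicit Defensive.
Import Order.TTheory GRing.Theory Num.Theory.
Local Open Scope ring_scope.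

Definition poch (a : rat) (j : nat) : rat := \prod_(i < j) (a + i%:R).

(* Main.v *)
Require Import Defs.
From HB Require Import structures.
From mathcomp Require Import all_boot all_order all_algebra.
From Stdlib Require Import Ring Field.
From Stdlib Require ZArith Lia.
Import Order.TTheory GRing.Theory Num.Theory.
Local Open Scope ring_scope.

Module RatTac.
Import ZArith Lia.
Local Open Scope ring_scope.

Definition addR (a b : rat) : rat := a + b.
Definition mulR (a b : rat) : rat := a * b.
Definition oppR (a : rat) : rat := - a.
Definition invR (a : rat) : rat := a^-1.
Definition subR (a b : rat) : rat := addR a (oppR b).
Definition divR (a b : rat) : rat := mulR a (invR b).
Definition zeroR : rat := 0.
Definition natR (m : nat) : rat := m%:R.
Definition oneR : rat := 1.

Ltac nlia := rewrite -?plusE -?multE; lia.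

Definition Z2I (z : Z) : int :=
  match z with Z0 => 0 | Zpos p => Posz (Pos.to_nat p) | Zneg p => - Posz (Pos.to_nat p) end.

Lemma Z2I_spec (z : Z) (a b : nat) : (z = Z.of_nat a - Z.of_nat b)%Z -> Z2I z = (a%:Z - b%:Z)%R.
Proof.
case: z => [|p|p] /= h.
- have e : a = b by nlia.
  by rewrite e subrr.
- have e : a = (Pos.to_nat p + b)%nat by nlia.
  by rewrite e PoszD addrK.
- have e : b = (Pos.to_nat p + a)%nat by nlia.
  by rewrite e PoszD opprD addrCA subrr addr0.
Qed.

Lemma Z2I_std (z : Z) : Z2I z = ((Z.to_nat z)%:Z - (Z.to_nat (- z))%:Z)%R.
Proof. apply: Z2I_spec; case: z => [|p|p] /=; nlia. Qed.

Lemma Z2I_add x y : Z2I (x + y) = (Z2I x + Z2I y)%R.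
Proof.
rewrite (Z2I_std x) (Z2I_std y).
rewrite (@Z2I_spec _ (Z.to_nat x + Z.to_nat y) (Z.to_nat (-x) + Z.to_nat (-y))); last by nlia.
by rewrite !PoszD opprD addrACA.
Qed.

Lemma Z2I_opp x : Z2I (- x) = (- Z2I x)%R.
Proof.
rewrite (Z2I_std x).
rewrite (@Z2I_spec _ (Z.to_nat (-x)) (Z.to_nat x)); last by nlia.
by rewrite opprB.
Qed.

Lemma Z2I_mul x y : Z2I (x * y) = (Z2I x * Z2I y)%R.
Proof.
rewrite (Z2I_std x) (Z2I_std y).
set a1 := Z.to_nat x; set b1 := Z.to_nat (-x); set a2 := Z.to_nat y; set b2 := Z.to_nat (-y).
rewrite (@Z2I_spec _ (a1 * a2 + b1 * b2) (a1 * b2 + b1 * a2)); last first.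
  rewrite /a1 /b1 /a2 /b2; nlia.
rewrite !PoszD !PoszM mulrBl !mulrBr opprB opprD !addrA.
congr (_ - _).
rewrite [RHS]addrC addrA; congr (_ - _).
by rewrite addrC.
Qed.

Definition phi (z : Z) : rat := (Z2I z)%:~R.

Lemma rat_field_th :
  @field_theory rat zeroR oneR addR mulR subR oppR divR invR eq.
Proof.
rewrite /zeroR /oneR /addR /mulR /subR /oppR /divR /invR.
split.
- split; [exact: add0r|exact: addrC|exact: addrA|exact: mul1r|exact: mulrC
        |exact: mulrA|exact: mulrDl|by []|exact: subrr].
- by [].
- by [].
- by move=> p hp; rewrite mulVf //; apply/eqP.
Qed.

Lemma phi_morph : ring_morph zeroR oneR addR mulR subR oppR eq
   0%Z 1%Z Z.add Z.mul Z.sub Z.opp Zeq_bool phi.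
Proof.
rewrite /zeroR /oneR /addR /mulR /subR /oppR /phi.
split.
- by [].
- by [].
- by move=> x y; rewrite Z2I_add intrD.
- by move=> x y; rewrite /Z.sub Z2I_add Z2I_opp intrD intrN.
- by move=> x y; rewrite Z2I_mul intrM.
- by move=> x; rewrite Z2I_opp intrN.
- by move=> x y /Zeq_bool_eq ->.
Qed.

Ltac ratcst t :=
  match t with
  | GRing.natmul _ ?m => match isnatcst m with true => constr:(Z.of_nat m) | _ => constr:(InitialRing.NotConstant) end
  | zeroR => constr:(0%Z)
  | natR ?m => match isnatcst m with true => constr:(Z.of_nat m) | _ => constr:(InitialRing.NotConstant) end
  | GRing.zero _ => constr:(0%Z)
  | GRing.one _ => constr:(1%Z)
  | oneR => constr:(1%Z)
  | _ => constr:(InitialRing.NotConstant)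
  end.

Add Field ratF : rat_field_th (morphism phi_morph, constants [ratcst]).

Lemma addE (a b : rat) : a + b = addR a b. Proof. by []. Qed.
Lemma mulE (a b : rat) : a * b = mulR a b. Proof. by []. Qed.
Lemma oppE (a : rat) : - a = oppR a. Proof. by []. Qed.
Lemma invE (a : rat) : a^-1 = invR a. Proof. by []. Qed.
Lemma zeroE : 0 = zeroR :> rat. Proof. by []. Qed.
Lemma oneE : 1 = oneR :> rat. Proof. by []. Qed.
Lemma natE (m : nat) : m%:R = natR m :> rat. Proof. by []. Qed.

Ltac to_R := rewrite ?natE ?invE ?mulE ?oppE ?addE ?zeroE ?oneE.
Ltac rat_field := match goal with |- @eq _ ?a ?b => change (@eq rat a b) end; to_R; field.
Ltac rat_ring := match goal with |- @eq _ ?a ?b => change (@eq rat a b) end; to_R; ring.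


Ltac side := repeat split; try (rewrite /zeroR; apply/eqP; vm_compute; by []).

Lemma phi_pos p : 0 < phi (Zpos p).
Proof.
rewrite /phi /=.
change (0 < (Pos.to_nat p)%:R :> rat).
rewrite ltr0n; apply/ssrnat.ltP; lia.
Qed.

Lemma pos_add_l (a b : rat) : 0 <= a -> 0 < b -> 0 < a + b.
Proof. by move=> ha hb; apply: ltr_wpDl. Qed.
Lemma pos_add_r (a b : rat) : 0 < a -> 0 <= b -> 0 < a + b.
Proof. by move=> ha hb; apply: ltr_wpDr. Qed.

Ltac pos :=
  match goal with
  | |- is_true (0 < _ + _) => first [apply: addr_gt0; pos | apply: pos_add_l; [nneg|pos] | apply: pos_add_r; [pos|nneg]]
  | |- is_true (0 < _ * _) => apply: mulr_gt0; pos
  | |- is_true (0 < _^-1) => rewrite invr_gt0; pos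
  | |- is_true (0 < phi _) => apply: phi_pos
  | |- is_true (0 < 1) => apply: ltr01
  | |- is_true (0 < (_ `!)%:R) => by rewrite ltr0n fact_gt0
  | |- is_true (0 < _%:R) => by rewrite ltr0n
  | |- _ => assumption
  end
with nneg :=
  match goal with
  | |- is_true (0 <= _ + _) => apply: addr_ge0; nneg
  | |- is_true (0 <= _ * _) => apply: mulr_ge0; nneg
  | |- is_true (0 <= _%:R) => apply: ler0n
  | |- _ => first [assumption | apply: ltW; pos]
  end.

Ltac nzb :=
  match goal with
  | |- is_true (- _ != 0) => rewrite oppr_eq0; nzb
  | |- is_true (_ * _ != 0) => rewrite mulf_eq0 negb_or; apply/andP; split; nzb
  | |- _ => apply: lt0r_neq0; pos
  end.

Ltac nzR := rewrite /zeroR /oneR /natR /addR /mulR /oppR /invR /subR /divR; apply/eqP; nzb.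
Ltac sides := repeat split; nzR.

End RatTac.
Import RatTac.

Definition Pc (x y : rat) : rat :=
  (-4*(x+1)*(92*x^+3+237*x^+2+197*x+53)-2*(22*x^+2+38*x+17)*y+2*(44*x^+2+76*x+33)*y^+2+8*y^+3-8*y^+4)
  / ((x+1)^+2*(4*x+5)*(4*x+3)).
Definition Qc (x y : rat) : rat := y*(y+x+3/2)*(y+2*x+3)*Pc x y.

Lemma key (x y : rat) : 0 <= x -> 0 <= y ->
  3*(3*x+4)*(3*x+2)*(4*y+1) - (2*x+3)^+2*(4*y+1)*
   ((x+1-y)*(2*x+5/2-y)*(2*x+3/2-y)*(x+3/2+y)*(2*x+2+y)*(2*x+3+y)
     / ((x+1)*(2*x+5/2)*(2*x+3/2)*(x+3/2)*(2*x+2)*(2*x+3)))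
  = - ((y-x-1)*(y-2*x-5/2)*(y+1/2)) / ((y+1)*(y+x+5/2)*(y+2*x+4)) * Qc x (y+1) - Qc x y.
Proof.
move=> hx hy. rewrite /Qc /Pc. rewrite !exprS !expr0.
rat_field; sides.

Qed.


Lemma poch0 a : poch a 0 = 1.
Proof. by rewrite /poch big_ord0. Qed.

Lemma pochS a k : poch a k.+1 = poch a k * (a + k%:R).
Proof. by rewrite /poch big_ord_recr. Qed.

Lemma poch_shift a k : a * poch (a + 1) k = poch a k * (a + k%:R).
Proof.
elim: k => [|k IH]; first by rewrite !poch0 addr0 mulr1 mul1r.
rewrite !pochS mulrA IH -!mulrA; congr (_ * _).
rewrite -natr1. rat_ring.
Qed.

Lemma poch_gt0 a k : 0 < a -> 0 < poch a k.
Proof. move=> ha; rewrite /poch; apply: prodr_gt0 => i _; apply: pos_add_r => //; apply: ler0n. Qed.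

Lemma poch_negn n k : (n < k)%N -> poch (- n%:R) k = 0.
Proof.
elim: k => [|k IH] //.
rewrite ltnS leq_eqVlt => /orP [/eqP ->| h].
- by rewrite pochS addNr mulr0.
- by rewrite pochS IH // mul0r.
Qed.

Lemma shift_up a b k : b = a + 1 -> a != 0 -> poch b k = poch a k * (a + k%:R) / a.
Proof. by move=> -> ha; rewrite -poch_shift mulrAC mulfV // mul1r. Qed.

Lemma shift_down a b k : b = a + 1 -> a + k%:R != 0 -> poch a k = a * poch b k / (a + k%:R).
Proof. by move=> -> h; rewrite poch_shift mulfK. Qed.

Ltac pos :=
  match goal with
  | |- is_true (0 < _ + _) => first [apply: addr_gt0; pos | apply: pos_add_l; [nneg|pos] | apply: pos_add_r; [pos|nneg]]
  | |- is_true (0 < _ * _) => apply: mulr_gt0; pos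
  | |- is_true (0 < _^-1) => rewrite invr_gt0; pos
  | |- is_true (0 < phi _) => apply: phi_pos
  | |- is_true (0 < poch _ _) => apply: poch_gt0; pos
  | |- is_true (0 < 1) => apply: ltr01
  | |- is_true (0 < (_ `!)%:R) => by rewrite ltr0n fact_gt0
  | |- is_true (0 < _%:R) => by rewrite ltr0n
  | |- _ => assumption
  end
with nneg :=
  match goal with
  | |- is_true (0 <= _ + _) => apply: addr_ge0; nneg
  | |- is_true (0 <= _ * _) => apply: mulr_ge0; nneg
  | |- is_true (0 <= _%:R) => apply: ler0n
  | |- _ => first [assumption | apply: ltW; pos]
  end.

Ltac nzb :=
  match goal with
  | |- is_true (- _ != 0) => rewrite oppr_eq0; nzb
  | |- is_true (_ * _ != 0) => rewrite mulf_eq0 negb_or; apply/andP; split; nzb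
  | |- _ => apply: lt0r_neq0; pos
  end.

Ltac nzR := rewrite /zeroR /oneR /natR /addR /mulR /oppR /invR /subR /divR; apply/eqP; nzb.
Ltac sides := repeat split; nzR.
Ltac ffield := rat_field; sides.

Definition T (n k : nat) : rat :=
     (-1) ^+ k * (4 * k%:R + 1) *
     (poch (- n%:R) k * poch (- 2 * n%:R - 1 / 2) k * poch (1 / 2) k)
     / ((k`!)%:R * poch (n%:R + 3 / 2) k * poch (2 * n%:R + 2) k).

Definition Hh (n k : nat) : rat :=
     (-1) ^+ k *
     (poch (- (n.+1)%:R) k * poch (- (2 * n%:R + 5 / 2)) k * poch (1 / 2) k)
     / ((k`!)%:R * poch (n%:R + 5 / 2) k * poch (2 * n%:R + 4) k).

Lemma T_zero n k : (n < k)%N -> T n k = 0.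
Proof. by move=> h; rewrite /T poch_negn // !(mul0r, mulr0). Qed.

Lemma Hh_zero n k : (n.+1 < k)%N -> Hh n k = 0.
Proof. by move=> h; rewrite /Hh poch_negn // !(mul0r, mulr0). Qed.

Lemma sum_ext n m : (n <= m)%N -> \sum_(k < m.+1) T n k = \sum_(k < n.+1) T n k.
Proof.
elim: m => [|m IH]; first by rewrite leqn0 => /eqP ->.
rewrite leq_eqVlt => /orP [/eqP -> //| h].
rewrite big_ord_recr /= IH; last by rewrite ltnS in h.
by rewrite T_zero // addr0.
Qed.

Lemma TS n k :
  T n.+1 k = Hh n k * (4*k%:R+1).
Proof.
rewrite /T /Hh.
have e1 : - 2 * (n.+1)%:R - 1/2 = - (2 * n%:R + 5/2) :> rat by rewrite -[(n.+1)%:R]natr1; ffield.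
have e2 : (n.+1)%:R + 3/2 = n%:R + 5/2 :> rat by rewrite -[(n.+1)%:R]natr1; ffield.
have e3 : 2 * (n.+1)%:R + 2 = 2 * n%:R + 4 :> rat by rewrite -[(n.+1)%:R]natr1; ffield.
rewrite e1 e2 e3. ffield.
Qed.

Lemma TH n k :
  T n k = Hh n k * (4*k%:R+1) * ((n%:R+1-k%:R)*(2*n%:R+5/2-k%:R)*(2*n%:R+3/2-k%:R)*(n%:R+3/2+k%:R)*(2*n%:R+2+k%:R)*(2*n%:R+3+k%:R)) / ((n%:R+1)*(2*n%:R+5/2)*(2*n%:R+3/2)*(n%:R+3/2)*(2*n%:R+2)*(2*n%:R+3)).
Proof.
have n0 : (0 <= n%:R :> rat) by apply: ler0n.
have k0 : (0 <= k%:R :> rat) by apply: ler0n.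
rewrite /T /Hh.
rewrite (@shift_up (- (n.+1)%:R) (- n%:R)); last first.
  by rewrite oppr_eq0; apply: lt0r_neq0; pos.
  by rewrite -[(n.+1)%:R]natr1; ffield.
rewrite (@shift_up (- (2 * n%:R + 3/2)) (- 2 * n%:R - 1/2)); last first.
  by rewrite oppr_eq0; apply: lt0r_neq0; pos.
  by ffield.
rewrite (@shift_up (- (2 * n%:R + 5/2)) (- (2 * n%:R + 3/2))); last first.
  by rewrite oppr_eq0; apply: lt0r_neq0; pos.
  by ffield.
rewrite (@shift_down (n%:R + 3/2) (n%:R + 5/2)); last first.
  by apply: lt0r_neq0; pos.
  by ffield.
rewrite (@shift_down (2 * n%:R + 2) (2 * n%:R + 3)); last first.
  by apply: lt0r_neq0; pos.
  by ffield.
rewrite (@shift_down (2 * n%:R + 3) (2 * n%:R + 4)); last first.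
  by apply: lt0r_neq0; pos.
  by ffield.
rewrite -[(n.+1)%:R]natr1.
ffield.
Qed.

Lemma HS n k :
  Hh n k.+1 = Hh n k * (- ((k%:R-n%:R-1)*(k%:R-2*n%:R-5/2)*(k%:R+1/2)) / ((k%:R+1)*(k%:R+n%:R+5/2)*(k%:R+2*n%:R+4))).
Proof.
have n0 : (0 <= n%:R :> rat) by apply: ler0n.
have k0 : (0 <= k%:R :> rat) by apply: ler0n.
rewrite /Hh !pochS factS natrM exprS -[(k.+1)%:R]natr1 -[(n.+1)%:R]natr1.
ffield.
Qed.

Definition G (n k : nat) : rat := Hh n k * Qc n%:R k%:R.

Lemma key' (x y h : rat) : 0 <= x -> 0 <= y ->
  3*(3*x+4)*(3*x+2) * (h * (4*y+1)) - (2*x+3)^+2 * (h * (4*y+1) * ((x+1-y)*(2*x+5/2-y)*(2*x+3/2-y)*(x+3/2+y)*(2*x+2+y)*(2*x+3+y)) / ((x+1)*(2*x+5/2)*(2*x+3/2)*(x+3/2)*(2*x+2)*(2*x+3))) = h * (- ((y-x-1)*(y-2*x-5/2)*(y+1/2)) / ((y+1)*(y+x+5/2)*(y+2*x+4))) * Qc x (y + 1) - h * Qc x y.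
Proof.
move=> hx hy.
have K := key x y hx hy.
transitivity (h * (3*(3*x+4)*(3*x+2) * (4*y+1) - (2*x+3)^+2 * (4*y+1) * (((x+1-y)*(2*x+5/2-y)*(2*x+3/2-y)*(x+3/2+y)*(2*x+2+y)*(2*x+3+y)) / ((x+1)*(2*x+5/2)*(2*x+3/2)*(x+3/2)*(2*x+2)*(2*x+3))))).
  rat_ring.
rewrite K. rat_ring.
Qed.

Lemma tele n k :
  3*(3*n%:R+4)*(3*n%:R+2) * T n.+1 k - (2*n%:R+3)^+2 * T n k = G n k.+1 - G n k.
Proof.
rewrite /G HS TS TH -[(k.+1)%:R]natr1.
by apply: key'; apply: ler0n.
Qed.

Lemma recur n :
  3*(3*n%:R+4)*(3*n%:R+2) * \sum_(k < n.+2) T n.+1 k - (2*n%:R+3)^+2 * \sum_(k < n.+1) T n k = 0.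
Proof.
rewrite -(@sum_ext n.+1 n.+2) // -(@sum_ext n n.+2) //.
rewrite !mulr_sumr -sumrB.
under eq_bigr => i _ do rewrite tele.
rewrite -(big_mkord xpredT (fun k => G n k.+1 - G n k)) telescope_sumr //.
rewrite /G Hh_zero // mul0r /Qc mulr0n !mul0r.
  by rewrite mulr0 subrr.
by rewrite -addn2 leq_addr.
Qed.

Definition Rr (n : nat) : rat :=
  (2 ^+ 2 / 3 ^+ 3) ^+ n * (poch (3 / 2) n) ^+ 2 / (poch (4 / 3) n * poch (2 / 3) n).

Lemma S_closed n : \sum_(k < n.+1) T n k = Rr n.
Proof.
elim: n => [|n IH].
  rewrite big_ord1 /T /Rr !poch0 !expr0 fact0.
  ffield.
have n0 : (0 <= n%:R :> rat) by apply: ler0n.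
have R := recur n.
move: R IH.
set A := \sum_(k < n.+2) T n.+1 k.
set B := \sum_(k < n.+1) T n k.
move/eqP; rewrite subr_eq0 => /eqP R IH.
have nz : 3*(3*n%:R+4)*(3*n%:R+2) != 0 :> rat by apply: lt0r_neq0; pos.
have hA : A = ((2*n%:R+3)^+2) / (3*(3*n%:R+4)*(3*n%:R+2)) * B.
  by apply: (mulfI nz); rewrite R !expr2; ffield.
rewrite hA IH /Rr !pochS !exprS !expr0.
ffield.
Qed.

Theorem theorem2 (n N : nat) (hN : (n <= N)%N) :
  \sum_(k < N.+1)
     (-1) ^+ k * (4 * k%:R + 1) *
     (poch (- n%:R) k * poch (- 2 * n%:R - 1 / 2) k * poch (1 / 2) k)
     / ((k`!)%:R * poch (n%:R + 3 / 2) k * poch (2 * n%:R + 2) k)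
  = (2 ^+ 2 / 3 ^+ 3) ^+ n * (poch (3 / 2) n) ^+ 2
      / (poch (4 / 3) n * poch (2 / 3) n) :> rat.
Proof.
change (\sum_(k < N.+1) T n k = Rr n).
by rewrite sum_ext // S_closed.
Qed.
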